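(* Let $f:[-1,1]\to[0,1]$ be non-increasing with $f(0)=\tfrac12$ and continuous at $0$, and let $\delta\in(0,\tfrac12]$. Consider the sequential design (truncated Wei's adaptive coin design) with $p_1=\tfrac12$ and, for $i\ge2$, $$p_i=\min\{\max\{f(R_{i-1}),\delta\},1-\delta\},\qquad R_{i-1}=\frac{D_{i-1}}{i-1},$$ where $D_k=m_k-n_k$, with $m_k$ and $n_k$ the numbers of units among the first $k$ assigned to treatment and control respectively, and $K_i\mid\mathcal F_{i-1}\sim\mathrm{Bernoulli}(p_i)$. Then $p_i\xrightarrow{p}\tfrac12$ as $i\to\infty$; i.e. the design is strongly stable with $p^\star=\tfrac12$.
   Context: $K_i\in\{0,1\}$ is the treatment indicator of unit $i$ and $\mathcal F_{i-1}=\sigma(K_1,\dots,K_{i-1})$ (together with the observed outcomes up to unit $i-1$). A sequential design $(p_i)$ is strongly stable if there is a non-random $p^\star\in(0,1)$ with $p_i\xrightarrow{p}p^\star$. *)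

(* Defs.v *)
From HB Require Import structures.
From mathcomp Require Import all_boot all_order all_algebra.
From mathcomp Require Import all_classical all_reals all_analysis.
Set Implicit Arguments. Unset Strict Implicit. Unset Printing Implicit Defensive.
Import Order.TTheory GRing.Theory Num.Theory.
Import numFieldNormedType.Exports.
Local Open Scope classical_set_scope.
Local Open Scope ring_scope.

(* Units are indexed 1, 2, 3, ...; index 0 is unused.
   K i x = true means unit i is assigned to treatment. *)

Definition Dimb {R : realType} {T : Type} (K : nat -> T -> bool) (k : nat) (x : T) : R :=
  \sum_(1 <= j < k.+1) (if K j x then 1 else -1).

Definition wei_p {R : realType} {T : Type} (f : R -> R) (delta : R)
    (K : nat -> T -> bool) (i : nat) (x : T) : R :=
  if (i <= 1)%N then 1 / 2
  else Num.min (Num.max (f (Dimb K i.-1 x / (i.-1)%:R)) delta) (1 - delta).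

Definition cvg_in_prob {R : realType} {d} {T : measurableType d}
    (P : probability T R) (X : nat -> T -> R) (c : R) : Prop :=
  forall eps : R, 0 < eps ->
    (fun n => P [set x | eps < `|X n x - c|]) @ \oo --> 0%E.

(* Main.v *)
Require Import Defs.
From HB Require Import structures.
From mathcomp Require Import all_boot all_order all_algebra.
From mathcomp Require Import all_classical all_reals all_analysis.
From mathcomp Require Import measurable_realfun lra ring.
Import Order.TTheory GRing.Theory Num.Theory.
Import numFieldNormedType.Exports.
Local Open Scope classical_set_scope.
Local Open Scope ring_scope.

Lemma sa_setT {T : Type} (G : set (set T)) : sigma_algebra setT G -> G setT.
Proof. by case=> G0 GC _; have := GC _ G0; rewrite setD0. Qed.

Lemma sa_setC {T : Type} (G : set (set T)) A : sigma_algebra setT G -> G A -> G (~` A).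
Proof. by case=> _ GC _ /GC; rewrite setTD. Qed.

Lemma sa_setU {T : Type} (G : set (set T)) A B : sigma_algebra setT G -> G A -> G B -> G (A `|` B).
Proof.
case=> G0 _ GU GA GB.
have -> : A `|` B = \bigcup_k (fun k => if k == 0%N then A else if k == 1%N then B else set0) k.
  apply/seteqP; split => x.
  - by case=> [xA|xB]; [exists 0%N | exists 1%N].
  - by case=> [[|[|k]]] _ //=; [left|right].
by apply: GU => -[|[|k]].
Qed.

Lemma sa_setI {T : Type} (G : set (set T)) A B : sigma_algebra setT G -> G A -> G B -> G (A `&` B).
Proof.
move=> sG GA GB; have -> : A `&` B = ~` (~` A `|` ~` B).
  by rewrite setCU !setCK.
by apply: sa_setC => //; apply: sa_setU => //; apply: sa_setC.
Qed.

Lemma Dimb0 {R : realType} {T : Type} (K : nat -> T -> bool) x : Dimb (R:=R) K 0 x = 0.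
Proof. by rewrite /Dimb big_geq. Qed.

Lemma DimbS {R : realType} {T : Type} (K : nat -> T -> bool) k x :
  Dimb (R:=R) K k.+1 x = Dimb K k x + (if K k.+1 x then 1 else -1).
Proof. by rewrite /Dimb big_nat_recr. Qed.

Lemma Dimb_bnd {R : realType} {T : Type} (K : nat -> T -> bool) k x :
  `|Dimb (R:=R) K k x| <= k%:R.
Proof.
elim: k => [|k IH]; first by rewrite Dimb0 normr0.
rewrite DimbS (le_trans (ler_normD _ _))// -natr1 lerD //.
by case: (K _ x); rewrite ?normrN normr1.
Qed.

Lemma filt_mono {T : Type} (F : nat -> set (set T)) :
  (forall n, F n `<=` F n.+1) -> forall j k, (j <= k)%N -> F j `<=` F k.
Proof.
move=> FS j k /subnK <-; elim: (k - j)%N => [|m IH] //= A FA.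
by rewrite addSn; apply: FS; apply: IH.
Qed.

Lemma Dimb_F {R : realType} {T : Type} (F : nat -> set (set T)) (K : nat -> T -> bool) :
  (forall n, sigma_algebra setT (F n)) -> (forall n, F n `<=` F n.+1) ->
  (forall i, (1 <= i)%N -> F i [set x | K i x]) ->
  forall k (S : set R), F k (Dimb K k @^-1` S).
Proof.
move=> sF FS FK; elim=> [|k IH] S.
  have [S0|S0] := pselect (S 0).
    have -> : Dimb K 0 @^-1` S = setT by apply/seteqP; split=> x //= _; rewrite Dimb0.
    exact: sa_setT.
  have -> : Dimb K 0 @^-1` S = set0 by apply/seteqP; split=> x //=; rewrite Dimb0.
  by case: (sF 0%N).
have -> : Dimb K k.+1 @^-1` S =
   (Dimb K k @^-1` [set y | S (y + 1)] `&` [set x | K k.+1 x]) `|`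
   (Dimb K k @^-1` [set y | S (y - 1)] `&` ~` [set x | K k.+1 x]).
  apply/seteqP; split=> x /=; rewrite DimbS.
  - case: (K _ x) => Sx; [left|right]; split => //.
  - by case: (K _ x) => -[] [] //= ? ?; rewrite ?subrK ?addrK.
have K1 : F k.+1 [set x | K k.+1 x] by apply: FK.
apply: sa_setU => //; apply: sa_setI => //.
- by apply: FS; apply: IH.
- by apply: FS; apply: IH.
- exact: sa_setC.
Qed.
Lemma clamp_props (R : realType) (a lo hi c : R) : lo <= c <= hi ->
  let y := Num.min (Num.max a lo) hi in
  [/\ lo <= y <= hi, `|y - c| <= `|a - c|, (a <= c -> y <= c) & (c <= a -> c <= y)].
Proof.
move=> /andP[h1 h2] /=.
have H : lo <= Num.min (Num.max a lo) hi <= hi /\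
   (a <= c -> a <= Num.min (Num.max a lo) hi <= c) /\
   (c <= a -> c <= Num.min (Num.max a lo) hi <= a).
  rewrite minElt maxElt.
  by case: (ltP a lo) => h3; case: (ltP lo hi) => h4; try case: (ltP a hi) => h5;
     (split; [apply/andP; split|split => h; apply/andP; split]); lra.
case: H => /andP[H1 H2] [H3 H4]; split.
- by rewrite H1 H2.
- case: (lerP a c) => h.
  + move/andP: (H3 h) => [g1 g2].
    have -> : `|Num.min (Num.max a lo) hi - c| = c - Num.min (Num.max a lo) hi.
      by rewrite ler0_norm ?opprB // subr_le0.
    lra.
  + move/andP: (H4 (ltW h)) => [g1 g2].
    have -> : `|Num.min (Num.max a lo) hi - c| = Num.min (Num.max a lo) hi - c.
      by rewrite ger0_norm // subr_ge0.
    lra.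
- by move=> /H3 /andP[].
- by move=> /H4 /andP[].
Qed.

Lemma half01 (R : realType) : 0 <= (1 / 2 : R) <= 1.
Proof. by apply/andP; split; lra. Qed.

Section Main.
Context (R : realType) (d : measure_display) (T : measurableType d)
  (P : probability T R) (f : R -> R) (delta : R)
  (F : nat -> set (set T)) (K : nat -> T -> bool).
Hypothesis hf01 : forall r, -1 <= r <= 1 -> 0 <= f r <= 1.
Hypothesis hfmono : forall r s, -1 <= r <= 1 -> -1 <= s <= 1 -> r <= s -> f s <= f r.
Hypothesis hf0 : f 0 = 1 / 2.
Hypothesis hfc : {for 0, continuous f}.
Hypothesis hd0 : 0 < delta.
Hypothesis hd12 : delta <= 1 / 2.
Hypothesis sF : forall n, sigma_algebra setT (F n).
Hypothesis Fm : forall n, F n `<=` measurable.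
Hypothesis FS : forall n, F n `<=` F n.+1.
Hypothesis FK : forall i, (1 <= i)%N -> F i [set x | K i x].
Hypothesis HB : forall i, (1 <= i)%N -> forall A, F i.-1 A ->
     P (A `&` [set x | K i x]) = (\int[P]_(x in A) (wei_p f delta K i x)%:E)%E.

Let D k x : R := Dimb (R:=R) K k x.
Let xi j x : R := if K j x then 1 else -1.
Let p i x : R := wei_p f delta K i x.

Lemma measD k (h : R -> R) : measurable_fun setT (fun x => h (D k x)).
Proof.
move=> _ Y mY; rewrite setTI; apply: Fm.
exact: (Dimb_F (R:=R) F K sF FS FK k (h @^-1` Y)).
Qed.

Lemma measK j : (1 <= j)%N -> measurable [set x | K j x].
Proof. by move=> j1; apply: Fm; apply: FK. Qed.

Lemma xiE j x : (1 <= j)%N -> xi j x = D j x - D j.-1 x.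
Proof. by case: j => // j _; rewrite /D DimbS /= addrC addKr. Qed.

Lemma measxi j : (1 <= j)%N -> measurable_fun setT (xi j).
Proof.
move=> j1; rewrite (_ : xi j = fun x => D j x - D j.-1 x); last first.
  by apply/funext => x; rewrite xiE.
by apply: measurable_funB; [exact: (measD j id) | exact: (measD j.-1 id)].
Qed.

Lemma measp i : measurable_fun setT (p i).
Proof. exact: (measD i.-1 (fun r => if (i <= 1)%N then 1 / 2
  else Num.min (Num.max (f (r / (i.-1)%:R)) delta) (1 - delta))). Qed.

Lemma bdd_int (A : set T) (g : T -> R) : measurable A -> measurable_fun setT g ->
  (exists M, forall x, `|g x| <= M) -> P.-integrable A (EFin \o g).
Proof.
move=> mA mg [M hM].
have mgA : measurable_fun A (EFin \o g).
  by apply/measurable_EFinP; exact: (measurable_funS _ (@subsetT _ A) mg).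
apply/integrableP; split => //.
apply: (le_lt_trans (integral_le_bound (`|M|)%:E _ _ _ _)) => //.
- by apply: aeW => x _ /=; rewrite lee_fin (le_trans (hM x))// ler_norm.
- rewrite (le_lt_trans (lee_wpmul2l _ (probability_le1 P mA)))//.
  by rewrite mule1 ltry.
Qed.


Lemma p_bnd i x : 0 <= p i x <= 1.
Proof.
rewrite /p /wei_p; case: ifP => _; first exact: half01.
have h2 : delta <= 1/2 <= 1 - delta by apply/andP; split => //; move: hd12; lra.
have [/andP[+ +] _ _ _] := @clamp_props _ (f (Dimb K i.-1 x / (i.-1)%:R)) _ _ _ h2.
move=> g1 g2; apply/andP; split; move: hd0; lra.
Qed.

Lemma ind_int (A : set T) (g : T -> R) : measurable A ->
  Rintegral P setT (fun x => \1_A x * g x) = Rintegral P A g.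
Proof.
move=> mA; rewrite -[in RHS](setTI A) Rintegral_mkcondr; apply: eq_Rintegral => x _.
by rewrite patchE indicE; case: (x \in A); rewrite ?mul1r ?mul0r.
Qed.

Lemma Rint_ind (A B : set T) : measurable A -> measurable B ->
  Rintegral P A (fun x => \1_B x) = fine (P (B `&` A)).
Proof. by move=> mA mB; rewrite /Rintegral integral_indic. Qed.

Lemma Rint1 (A : set T) : measurable A -> Rintegral P A (fun=> 1) = fine (P A).
Proof. by move=> mA; rewrite Rintegral_cst // mul1r. Qed.

Lemma key k (A : set T) : (1 <= k)%N -> F k.-1 A ->
  Rintegral P A (xi k) = Rintegral P A (fun x => 2 * p k x - 1).
Proof.
move=> k1 FA; have mA : measurable A := @Fm k.-1 A FA.
have mK := measK k k1.
have i1 : P.-integrable A (EFin \o (fun=> (1:R))).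
  by apply: bdd_int => //; exists 1 => _; rewrite normr1.
have iK : P.-integrable A (EFin \o (fun x => 2 * \1_[set x | K k x] x)).
  apply: bdd_int => //.
    by apply: measurable_funM; [exact: measurable_cst|exact: measurable_indic].
  exists 2 => x; rewrite indicE normrM; case: (_ \in _); rewrite ?normr0 ?mulr0 ?normr1 ?mulr1 //.
  by rewrite ger0_norm.
have ip : P.-integrable A (EFin \o (fun x => 2 * p k x)).
  apply: bdd_int => //; first by apply: measurable_funM; [exact: measurable_cst|exact: measp].
  exists 2 => x; have /andP[g1 g2] := p_bnd k x; rewrite normrM ger0_norm // ger0_norm //.
  by move: g1 g2; lra.
have -> : Rintegral P A (xi k) = Rintegral P A (fun x => 2 * \1_[set x | K k x] x - 1).
  apply: eq_Rintegral => x _; rewrite /xi indicE.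
  have -> : (x \in [set x0 | K k x0]) = K k x by apply/idP/idP => [/set_mem|/mem_set].
  by case: (K k x) => /=; lra.
rewrite RintegralB // RintegralB // !RintegralZl //.
- congr (2 * _ - _); rewrite Rint_ind // setIC HB //.
- (apply: bdd_int => //; last by exists 1 => x; rewrite indicE; case: (_ \in _); rewrite ?normr0 ?normr1);
  exact: measurable_indic.
- (apply: bdd_int => //; last by exists 1 => x; have /andP[g1 g2] := p_bnd k x; rewrite ger0_norm);
  exact: measp.
Qed.


Definition good (g : T -> R) := measurable_fun setT g /\ exists M, forall x, `|g x| <= M.

Lemma good_int A g : measurable A -> good g -> P.-integrable A (EFin \o g).
Proof. by move=> mA [mg bg]; exact: bdd_int. Qed.

Lemma good_cst c : good (fun=> c).
Proof. by split; [exact: measurable_cst | exists `|c|]. Qed.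

Lemma good_D m : good (D m).
Proof. by split; [exact: (measD m id) | exists m%:R => x; exact: Dimb_bnd]. Qed.

Lemma good_xi j : (1 <= j)%N -> good (xi j).
Proof.
move=> j1; split; first exact: measxi.
by exists 1 => x; rewrite /xi; case: (K j x); rewrite ?normrN normr1.
Qed.

Lemma good_p k : good (p k).
Proof.
split; first exact: measp.
by exists 1 => x; have /andP[g1 g2] := p_bnd k x; rewrite ger0_norm.
Qed.

Lemma good_add g h : good g -> good h -> good (fun x => g x + h x).
Proof.
move=> [mg [M1 b1]] [mh [M2 b2]]; split; first exact: measurable_funD.
by exists (M1 + M2) => x; rewrite (le_trans (ler_normD _ _))// lerD.
Qed.

Lemma good_mul g h : good g -> good h -> good (fun x => g x * h x).
Proof.
move=> [mg [M1 b1]] [mh [M2 b2]]; split; first exact: measurable_funM.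
exists (M1 * M2) => x; rewrite normrM ler_pM //.
Qed.

Lemma good_ind A : measurable A -> good (fun x => \1_A x).
Proof.
move=> mA; split; first exact: measurable_indic.
by exists 1 => x; rewrite indicE; case: (_ \in _); rewrite ?normr0 ?normr1.
Qed.

Lemma xi_mul j g : (1 <= j)%N -> good g ->
  Rintegral P setT (fun x => xi j x * g x) =
  2 * Rintegral P [set x | K j x] g - Rintegral P setT g.
Proof.
move=> j1 gg; have mK := measK j j1.
have -> : Rintegral P setT (fun x => xi j x * g x) =
    Rintegral P setT (fun x => 2 * (\1_[set x | K j x] x * g x) - g x).
  apply: eq_Rintegral => x _; rewrite /xi indicE.
  have -> : (x \in [set x0 | K j x0]) = K j x by apply/idP/idP => [/set_mem|/mem_set].
  by case: (K j x) => /=; rewrite ?mul1r ?mul0r ?mulr0; lra.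
rewrite RintegralB //.
- by rewrite RintegralZl // ?ind_int //; apply: good_int => //; apply: good_mul => //; apply: good_ind.
- by apply: good_int => //; apply: good_mul; [exact: good_cst|apply: good_mul => //; apply: good_ind].
- exact: good_int.
Qed.


Lemma good_2p k : good (fun x => 2 * p k x - 1).
Proof. by apply: good_add; [apply: good_mul; [exact: good_cst|exact: good_p]|exact: good_cst]. Qed.

Lemma cross j k : (1 <= j)%N -> (j < k)%N ->
  Rintegral P setT (fun x => xi j x * xi k x) =
  Rintegral P setT (fun x => xi j x * (2 * p k x - 1)).
Proof.
move=> j1 jk; have k1 : (1 <= k)%N by apply: leq_trans jk.
rewrite !xi_mul //; last 2 first.
- exact: good_2p.
- exact: good_xi.
rewrite !key //.
- exact: sa_setT.
- apply: (filt_mono F FS j k.-1); first by rewrite -ltnS prednK.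
  exact: FK.
Qed.

Lemma csum m k : (m < k)%N ->
  Rintegral P setT (fun x => D m x * xi k x) =
  Rintegral P setT (fun x => D m x * (2 * p k x - 1)).
Proof.
elim: m => [|m IH] mk.
  have E0 : forall g : T -> R, Rintegral P setT (fun x => D 0 x * g x) = 0.
    move=> g; rewrite (@eq_Rintegral _ _ _ P _ (fun=> 0)) ?Rintegral_cst ?mul0r //.
    by move=> x _; rewrite /D Dimb0 mul0r.
  by rewrite !E0.
have k1 : (1 <= k)%N by apply: leq_trans mk.
have split1 : forall g : T -> R, good g -> Rintegral P setT (fun x => D m.+1 x * g x) =
    Rintegral P setT (fun x => D m x * g x) + Rintegral P setT (fun x => xi m.+1 x * g x).
  move=> g gg; rewrite -RintegralD //.
  - by apply: eq_Rintegral => x _; rewrite /D DimbS mulrDl.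
  - by apply: good_int => //; apply: good_mul => //; exact: good_D.
  - by apply: good_int => //; apply: good_mul => //; exact: good_xi.
rewrite !split1 //; last 2 first.
- exact: good_2p.
- exact: good_xi.
rewrite IH; last exact: ltnW.
by rewrite cross.
Qed.


Lemma sign k x : D k x * (2 * p k.+1 x - 1) <= 0.
Proof.
case: k => [|k]; first by rewrite /D Dimb0 mul0r.
rewrite /p /wei_p /=.
set Dk := Dimb K k.+1 x.
have hb := Dimb_bnd (R:=R) K k.+1 x; rewrite -/Dk in hb.
have kp : (0 : R) < k.+1%:R by rewrite ltr0n.
set r := Dk / k.+1%:R.
have r1 : -1 <= r <= 1.
  rewrite -ler_norml /r normrM normfV (ger0_norm (ltW kp)) ler_pdivrMr // mul1r.
  exact: hb.
have h2 : delta <= 1/2 <= 1 - delta by apply/andP; split => //; move: hd12; lra.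
have [_ _ c1 c2] := @clamp_props _ (f r) _ _ _ h2.
have r0 : -1 <= (0:R) <= 1 by apply/andP; split; lra.
have [Dk0|Dk0] := lerP 0 Dk.
- apply: mulr_ge0_le0 => //.
  have : f r <= 1 / 2.
    rewrite -hf0; apply: hfmono => //; rewrite /r divr_ge0 //; exact: ltW.
  by move/c1; lra.
- apply: mulr_le0_ge0; first exact: ltW.
  have : 1 / 2 <= f r.
    rewrite -hf0; apply: hfmono => //; rewrite /r; apply: mulr_le0_ge0; [exact: ltW|].
    by rewrite invr_ge0 ltW.
  by move/c2; lra.
Qed.

Definition V k := Rintegral P setT (fun x => D k x ^+ 2).

Lemma V_step k : V k.+1 <= V k + 1.
Proof.
have -> : V k.+1 = Rintegral P setT (fun x => (D k x ^+ 2 + 2 * (D k x * xi k.+1 x)) + 1).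
  apply: eq_Rintegral => x _; rewrite /D DimbS /xi.
  by case: (K k.+1 x); rewrite ?mulr1 ?mulrN1; lra.
have gD := good_D k; have gx : good (xi k.+1) by exact: good_xi.
rewrite RintegralD //; last 2 first.
- apply: good_int => //; apply: good_add; first exact: good_mul.
  by apply: good_mul; [exact: good_cst|exact: good_mul].
- exact/good_int/good_cst.
rewrite RintegralD //; last 2 first.
- exact/good_int/good_mul.
- by apply: good_int => //; apply: good_mul; [exact: good_cst|exact: good_mul].
rewrite RintegralZl //; last exact/good_int/good_mul.
rewrite csum // Rint1 // probability_setT /=.
have : Rintegral P setT (fun x => D k x * (2 * p k.+1 x - 1)) <= 0.
  rewrite -(mul0r (fine (P setT))) -Rintegral_cst //.
  apply: le_Rintegral => //.
  - by apply: good_int => //; apply: good_mul => //; exact: good_2p.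
  - exact/good_int/good_cst.
  - by move=> x _; exact: sign.
rewrite /V; lra.
Qed.


Lemma V_bnd n : V n <= n%:R.
Proof.
elim: n => [|n IH].
  rewrite /V (@eq_Rintegral _ _ _ P _ (fun=> 0)) ?Rintegral_cst ?mul0r //.
  by move=> x _; rewrite /D Dimb0 expr0n.
by rewrite (le_trans (V_step n)) // -natr1 lerD2r.
Qed.

Lemma cheb n c : 0 < c ->
  c ^+ 2 * fine (P [set x | c <= `|D n x|]) <= n%:R.
Proof.
move=> c0.
have mS : measurable [set x | c <= `|D n x|].
  exact: (@Fm n _ (Dimb_F (R:=R) F K sF FS FK n [set y | c <= `|y|])).
apply: le_trans (V_bnd n).
rewrite -[[set x | c <= `|D n x|]]setIT -Rint_ind // -RintegralZl //; last exact/good_int/good_ind.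
apply: le_Rintegral => //.
- by apply: good_int => //; apply: good_mul; [exact: good_cst|exact: good_ind].
- by apply: good_int => //; apply: good_mul; exact: good_D.
- move=> x _; rewrite indicE; case: (boolP (x \in _)) => [/set_mem /= h|_]; last first.
    by rewrite mulr0 sqr_ge0.
  rewrite mulr1 -[D n x ^+ 2]ger0_norm ?sqr_ge0 // normrX.
  by rewrite lerXn2r // ?nnegrE // ltW.
Qed.


Lemma cont_eta eps : 0 < eps -> exists2 eta : R, 0 < eta &
  forall t : R, `|t| < eta -> `|f t - 1 / 2| < eps.
Proof.
move=> e0; have := hfc; move=> /cvgrPdist_lt /(_ eps e0).
move=> /nbhs_ballP [eta eta0 H]; exists eta => // t ht.
rewrite -hf0 distrC; apply: (H t).
by rewrite /ball /= sub0r normrN.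
Qed.


Lemma incl n eps eta : (1 <= n)%N -> 0 < eta ->
  (forall t : R, `|t| < eta -> `|f t - 1 / 2| < eps) ->
  [set x | eps < `|p n.+1 x - 1 / 2|] `<=` [set x | eta * n%:R <= `|D n x|].
Proof.
move=> n1 eta0 Hc x /= H; rewrite leNgt; apply/negP => hlt.
have np : (0 : R) < n%:R by rewrite ltr0n.
move: H; rewrite /p /wei_p /= ifF; last by rewrite ltnNge n1.
rewrite -/(D n x).
have h2 : delta <= 1/2 <= 1 - delta by apply/andP; split => //; move: hd12; lra.
have [_ c _ _] := @clamp_props _ (f (D n x / n%:R)) _ _ _ h2.
have : `|f (D n x / n%:R) - 1 / 2| < eps.
  apply: Hc; rewrite normrM normfV (ger0_norm (ltW np)) ltr_pdivrMr //.
by move: c; lra.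
Qed.

Lemma measS n (h : R -> R) (S : set R) : measurable [set x | S (h (D n x))].
Proof. exact: (@Fm n _ (Dimb_F (R:=R) F K sF FS FK n (h @^-1` S))). Qed.

Lemma bound n eps eta : (1 <= n)%N -> 0 < eta ->
  (forall t : R, `|t| < eta -> `|f t - 1 / 2| < eps) ->
  (P [set x | (eps < `|p n.+1 x - 1 / 2|)%R] <= (eta ^-2 * n%:R ^-1)%:E)%E.
Proof.
move=> n1 eta0 Hc.
have np : (0 : R) < n%:R by rewrite ltr0n.
have mT : measurable [set x | eta * n%:R <= `|D n x|] by exact: (measS n id [set y | _ <= `|y|]).
have mS : measurable [set x | eps < `|p n.+1 x - 1 / 2|].
  exact: (measS n (fun r => if (n.+1 <= 1)%N then 1 / 2
    else Num.min (Num.max (f (r / (n.+1.-1)%:R)) delta) (1 - delta)) [set y | eps < `|y - 1/2|]).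
have LM := le_measure P (mem_set mS) (mem_set mT) (@incl n eps eta n1 eta0 Hc).
apply: (le_trans LM).
suff B : (P [set x | (eta * n%:R <= `|D n x|)%R] <= (eta ^-2 * n%:R ^-1)%:E)%E by exact: B.
have fin : (P [set x | (eta * n%:R <= `|D n x|)%R] \is a fin_num)%E.
  by rewrite ge0_fin_numE // (le_lt_trans (probability_le1 P mT)) // ltry.
rewrite -(fineK fin) lee_fin.
have := @cheb n (eta * n%:R) (mulr_gt0 eta0 np).
set q := fine _ => hq.
have c2 : 0 < (eta * n%:R) ^+ 2 by rewrite exprn_gt0 // mulr_gt0.
rewrite -(ler_pM2l c2) (le_trans hq) //.
have -> : (eta * n%:R) ^+ 2 * (eta ^- 2 / n%:R) = n%:R.
  by field; apply/andP; split; rewrite gt_eqF.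
by [].
Qed.


Lemma final : cvg_in_prob P (wei_p f delta K) (1/2).
Proof.
move=> eps e0; have [eta eta0 Hc] := @cont_eta eps e0.
apply: (@squeeze_cvge _ _ _ _ (fun=> 0%E) _ (fun n => (eta ^-2 * harmonic (n - 2)%N)%:E) _ 0%E).
- near=> n.
  have n2 : (2 <= n)%N by near: n; exact: nbhs_infty_ge.
  apply/andP; split; first exact: measure_ge0.
  have -> : wei_p f delta K n = p n.-1.+1 by rewrite prednK // ltnW.
  have m1 : (1 <= n.-1)%N by rewrite -ltnS prednK // ltnW.
  rewrite /harmonic /= (_ : (n - 2).+1 = n.-1)%N; last first.
    by rewrite -subSn // subn2.
  exact: (@bound n.-1 eps eta m1 eta0 Hc).
- exact: cvg_cst.
- apply: cvg_EFin; first exact: nearW.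
  rewrite -(mulr0 (eta ^-2)); apply: cvgMr.
  have := @cvg_harmonic R; rewrite -(cvg_centern 2); exact.
Unshelve. all: by end_near.
Qed.

End Main.

Theorem lemma1 (R : realType) (d : measure_display) (T : measurableType d)
  (P : probability T R)
  (f : R -> R) (delta : R)
  (F : nat -> set (set T)) (K : nat -> T -> bool) :
  (* f : [-1,1] -> [0,1], non-increasing, f(0) = 1/2, continuous at 0 *)
  (forall r, -1 <= r <= 1 -> 0 <= f r <= 1) ->
  (forall r s, -1 <= r <= 1 -> -1 <= s <= 1 -> r <= s -> f s <= f r) ->
  f 0 = 1 / 2 ->
  {for 0, continuous f} ->
  (* delta in (0, 1/2] *)
  0 < delta -> delta <= 1 / 2 ->
  (* F is a filtration of sub-sigma-algebras, F_0 trivial information allowed *)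
  (forall n, sigma_algebra setT (F n)) ->
  (forall n, F n `<=` measurable) ->
  (forall n, F n `<=` F n.+1) ->
  (* K_i is F_i-measurable (F_i contains sigma(K_1,...,K_i)) *)
  (forall i, (1 <= i)%N -> F i [set x | K i x]) ->
  (* K_i | F_{i-1} ~ Bernoulli(p_i) *)
  (forall i, (1 <= i)%N -> forall A, F i.-1 A ->
     P (A `&` [set x | K i x]) = (\int[P]_(x in A) (wei_p f delta K i x)%:E)%E) ->
  cvg_in_prob P (wei_p f delta K) (1 / 2).
Proof.
move=> h1 h2 h3 h4 h5 h6 h7 h8 h9 h10 h11.
exact: (@final R d T P f delta F K h2 h3 h4 h5 h6 h7 h8 h9 h10 h11).
Qed.
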